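(* Let $R$ be a ring with identity and involution $*$, and let $a,b\in R$ be dual core invertible with dual core inverses $a_{\oplus}$ and $b_{\oplus}$. If $ab=0$ and $ab^*=0$, then $a+b$ is dual core invertible and $$(a+b)_{\oplus}=a_{\oplus}+b_{\oplus}a^{\pi},$$ where $a^{\pi}=1-aa_{\oplus}$.
   Context: An involution on $R$ satisfies $(a^* )^*=a$, $(ab)^*=b^*a^*$, $(a+b)^*=a^*+b^*$. An element $x\in R$ is a dual core inverse of $a$ if $axa=a$, $xR=a^*R$ and $Rx=Ra$; it is unique when it exists and is denoted $a_{\oplus}$. *)

(* Defs.v *)
From HB Require Import structures.
From mathcomp Require Import all_boot all_order all_algebra.
Set Implicit Arguments. Unset Strict Implicit. Unset Printing Implicit Defensive.
Import GRing.Theory.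
Local Open Scope ring_scope.

Definition is_involution (R : pzRingType) (star : R -> R) : Prop :=
  [/\ forall a, star (star a) = a,
      forall a b, star (a * b) = star b * star a &
      forall a b, star (a + b) = star a + star b].

Definition rideal_eq (R : pzRingType) (x y : R) : Prop :=
  forall z : R, (exists r, z = x * r) <-> (exists r, z = y * r).

Definition lideal_eq (R : pzRingType) (x y : R) : Prop :=
  forall z : R, (exists r, z = r * x) <-> (exists r, z = r * y).

Definition is_dual_core_inverse (R : pzRingType) (star : R -> R) (a x : R) : Prop :=
  [/\ a * x * a = a, rideal_eq x (star a) & lideal_eq x a].

(* Main.v *)
Require Import Defs.
From mathcomp Require Import all_boot all_order all_algebra.
Local Open Scope ring_scope.
Import GRing.Theory.

Lemma star0 (R : pzRingType) (star : R -> R) : is_involution star -> star 0 = 0.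
Proof.
case=> _ _ Hadd. have := Hadd 0 0; rewrite addr0 => H.
by have := congr1 (fun t => t - star 0) H; rewrite subrr addrK.
Qed.

Lemma dci_props (R : pzRingType) (star : R -> R) (Hs : is_involution star) (a x : R) :
  is_dual_core_inverse star a x ->
  [/\ a * x * a = a, x * a * x = x, star (x * a) = x * a, x = x * x * a &
    a = a * a * x] /\ exists r, x = star a * r.
Proof.
case=> H1 Hr Hl; case: Hs => Hinv Hmul Hadd.
have [u Hu] : exists u, x = u * a by apply: (proj1 (Hl x)); exists 1; rewrite mul1r.
have [r Hrr] : exists r, x = star a * r by apply: (proj1 (Hr x)); exists 1; rewrite mulr1.
have E1 : x = x * x * a by rewrite {1}Hu -{1}H1 !mulrA -Hu.
have E2 : x = star (x * a) * x.
  have : star a = star a * star x * star a by rewrite -{1}H1 Hmul Hmul mulrA.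
  by move=> Ha'; rewrite Hmul {1}Hrr {1}Ha' -!mulrA -Hrr.
have E3 : star (x * a) * (x * a) = x * a by rewrite mulrA -E2.
have E4 : star (x * a) = x * a.
  by rewrite -{2}E3 -{1}E3 Hmul Hinv.
have E5 : x * a * x = x by rewrite -E4 -E2.
have [v Hv] : exists v, a = v * x by apply: (proj2 (Hl a)); exists 1; rewrite mul1r.
split; last by exists r. split => //.
transitivity (v * (x * a * x)); first by rewrite E5.
by rewrite !mulrA -Hv.
Qed.

Lemma dci_of (R : pzRingType) (star : R -> R) (Hs : is_involution star) (s z : R) :
  s * z * s = s -> z * s * z = z -> star (z * s) = z * s ->
  s = s * s * z -> z = z * z * s ->
  is_dual_core_inverse star s z.
Proof.
move=> H1 H2 H3 H4 H5; case: Hs => Hinv Hmul Hadd; split => // w; split.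
- case=> r ->; exists (star z * z * r).
  by rewrite -{1}H2 -H3 Hmul !mulrA.
- case=> r ->; exists (s * star s * r).
  have E : star s = z * s * star s.
    have E0 : star (s * (z * s)) = z * s * star s by rewrite Hmul H3.
    by rewrite mulrA H1 in E0.
  by rewrite {1}E !mulrA.
- case=> r ->; exists (r * z * z); by rewrite {1}H5 !mulrA.
- case=> r ->; exists (r * s * s); by rewrite {1}H4 !mulrA.
Qed.

Theorem theorem4p8 (R : pzRingType) (star : R -> R) (Hstar : is_involution star)
  (a b ad bd : R)
  (Ha : is_dual_core_inverse star a ad) (Hb : is_dual_core_inverse star b bd)
  (Hab : a * b = 0) (Habs : a * star b = 0) :
  is_dual_core_inverse star (a + b) (ad + bd * (1 - a * ad)).
Proof.
have [[a1 a2 a3 a4 a5] [ra Hra]] := @dci_props _ _ Hstar _ _ Ha.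
have [[b1 b2 b3 b4 b5] [rb Hrb]] := @dci_props _ _ Hstar _ _ Hb.
have [Hinv Hmul Hadd] := Hstar.
have s0 := @star0 _ _ Hstar.
have xb : ad * b = 0 by rewrite a4 -mulrA Hab mulr0.
have ay : a * bd = 0 by rewrite Hrb mulrA Habs mul0r.
have bx : b * ad = 0.
  by rewrite Hra mulrA -{1}(Hinv b) -Hmul Habs s0 mul0r.
have pa : (1 - a * ad) * a = 0 by rewrite mulrBl mul1r a1 subrr.
have pb : (1 - a * ad) * b = b by rewrite mulrBl mul1r -mulrA xb mulr0 subr0.
have pad : (1 - a * ad) * ad = ad - a * ad * ad by rewrite mulrBl mul1r.
have xy : ad * bd = 0 by rewrite a4 -mulrA ay mulr0.
have pbd : (1 - a * ad) * bd = bd by rewrite mulrBl mul1r -mulrA xy mulr0 subr0.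
have bp : b * (1 - a * ad) = b - b * a * ad by rewrite mulrBr mulr1 mulrA.
have yp : bd * (1 - a * ad) = bd - bd * a * ad by rewrite mulrBr mulr1 mulrA.
have yx : bd * ad = 0 by rewrite b4 -mulrA bx mulr0.
move: pa pb pad pbd bp yp; move: (1 - a * ad) => p pa pb pad pbd bp yp.
have zs : (ad + bd * p) * (a + b) = ad * a + bd * b.
  by rewrite mulrDl !mulrDr -!mulrA pa pb xb mulr0 addr0 add0r.
have sz : (a + b) * (ad + bd * p) = a * ad + b * bd * p.
  by rewrite mulrDl !mulrDr !mulrA ay bx mul0r addr0 add0r.
apply: (@dci_of _ _ Hstar).
- by rewrite -mulrA zs !mulrDl !mulrDr !mulrA a1 b1 ay bx !mul0r addr0 add0r.
- by rewrite zs !mulrDl !mulrDr !mulrA -(mulrA ad a bd) ay -(mulrA bd b ad) bx a2 b2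
    !mulr0 !mul0r addr0 add0r.
- by rewrite zs Hadd a3 b3.
- rewrite -mulrA sz !mulrDl !mulrDr !mulrA -a5 -b5 Hab bp !mul0r addr0.
  congr (_ + _); by rewrite addrC subrK.
- rewrite -mulrA zs !mulrDl !mulrDr !mulrA -a4 xy -(mulrA bd p ad) pad
    -(mulrA bd p bd) pbd -b4 mulrBr mulrBl yx mul0r !mulrA. 
  have E : bd * a * ad * ad * a = bd * a * ad.
    by rewrite -!mulrA (mulrA ad ad a) -a4.
  by rewrite E yp mul0r addr0 add0r; congr (_ + _); rewrite addrC.
Qed.
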